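(* Let $p$ be an odd prime, $G$ a finite non-abelian $p$-group, and $N$ a normal subgroup of $G$ with $C_G(N)\leq N$. Let $m$ be a positive integer with $d(Z(G))<m$. If $\mathrm{H}^1(G/N,\Omega_1(Z(N)))\cong\mathrm{F}_p^m$, then $G$ has a non-inner automorphism of order $p$.
   Context: $d(X)$ is the minimal number of generators of a group $X$; $\Omega_1(X)=\langle x\in X: x^p=1\rangle$; $\mathrm{F}_p$ is the field with $p$ elements. $G/N$ acts on $Z(N)$ (and on $\Omega_1(Z(N))$) via conjugation by $G$, making $\Omega_1(Z(N))$ an $\mathrm{F}_p(G/N)$-module; $\mathrm{H}^1(G/N,M)=\mathrm{Der}(G/N,M)/\mathrm{Ider}(G/N,M)$, where a derivation satisfies $\delta(xy)=\delta(x)^y\delta(y)$ and inner derivations are $\delta_h(g)=(h^{-1})^gh$. *)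

(* Defs.v *)
From HB Require Import structures.
From mathcomp Require Import all_boot all_fingroup all_solvable.
Set Implicit Arguments. Unset Strict Implicit. Unset Printing Implicit Defensive.

Import GroupScope.
Local Open Scope group_scope.

Definition dgen (gT : finGroupType) (X : {set gT}) : nat :=
  \big[minn/#|X|]_(S : {set gT} | <<S>> == X) #|S|.

Section Cohomology.
Variables (gT : finGroupType) (G N : {set gT}) (M : {set gT}).

(* Action of a coset xb \in G/N on M: conjugation by a representative.
   (Well defined when N centralizes M, e.g. M = Omega_1(Z(N)).) *)
Definition cact (m : gT) (xb : coset_of N) : gT := m ^ repr xb.

(* Derivations G/N -> M: delta(xy) = delta(x)^y delta(y); normalized to be
   1 outside G/N. *)
Definition is_der (d : {ffun coset_of N -> gT}) : bool :=
  [forall x, (x \in G / N) ==> (d x \in M)] &&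
  [forall x, (x \notin G / N) ==> (d x == 1)] &&
  [forall x in G / N, forall y in G / N, d (x * y) == cact (d x) y * d y].

Definition Der : {set {ffun coset_of N -> gT}} := [set d | is_der d].

Definition inner_der (h : gT) : {ffun coset_of N -> gT} :=
  [ffun xb => if xb \in G / N then cact h^-1 xb * h else 1].

Definition Ider : {set {ffun coset_of N -> gT}} := [set inner_der h | h in M].

Definition fmul (d e : {ffun coset_of N -> gT}) : {ffun coset_of N -> gT} :=
  [ffun xb => d xb * e xb].

Definition der_class (d : {ffun coset_of N -> gT}) :=
  [set fmul d i | i in Ider].

(* H^1(G/N, M) = Der / Ider, as the set of cosets. *)
Definition H1 : {set {set {ffun coset_of N -> gT}}} := [set der_class d | d in Der].

End Cohomology.

Definition inner_aut (gT : finGroupType) (G : {set gT}) (a : {perm gT}) : Prop :=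
  exists2 x, x \in G & {in G, forall y, a y = y ^ x}.

(* Main.v *)
Require Import Defs.
From mathcomp Require Import all_boot all_fingroup all_solvable.
From Stdlib Require Import Classical.
Set Implicit Arguments. Unset Strict Implicit. Unset Printing Implicit Defensive.
Import GroupScope.

Lemma card_imset_factor (T U V : finType) (A : {set T}) (f : T -> U) (g : T -> V) :
  {in A &, forall x y, f x = f y -> g x = g y} -> #|g @: A| <= #|f @: A|.
Proof.
move=> H; case: (set_0Vmem A) => [-> | [x0 x0A]]; first by rewrite !imset0 cards0.
pose h u := g (odflt x0 [pick x in A | f x == u]).
apply: (leq_trans _ (leq_imset_card h _)); apply: subset_leq_card.
apply/subsetP => _ /imsetP[x xA ->].
have -> : g x = h (f x).
  rewrite /h; case: pickP => [x' /andP[x'A /eqP fx'] | none] /=.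
    by apply: H.
  by have := none x; rewrite xA eqxx.
by apply: imset_f; apply: imset_f.
Qed.

Lemma dgen_witness (gT : finGroupType) (X : {group gT}) :
  exists2 S : {set gT}, <<S>> = X & #|S| <= dgen X.
Proof.
rewrite /dgen; apply: (big_ind (fun v => exists2 S : {set gT}, <<S>> = X & #|S| <= v)).
- by exists (X : {set gT}); [exact: genGid | done].
- move=> a b [S1 e1 l1] [S2 e2 l2] /=; case: (leqP a b) => h.
    by exists S1 => //; rewrite leq_min l1 (leq_trans l1 h).
  by exists S2 => //; rewrite leq_min l2 (leq_trans l2 (ltnW h)).
- by move=> S /eqP <-; exists S.
Qed.

Section Main.
Variables (gT : finGroupType) (p : nat) (G N : {group gT}).
Hypotheses (pr_p : prime p) (pG : p.-group G) (nNG : N <| G) (sCN : 'C_G(N) \subset N).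

Local Notation Z := 'Z(N).
Local Notation M := 'Ohm_1('Z(N)).

Lemma sNG : N \subset G. Proof. exact: normal_sub. Qed.
Lemma nNG' : G \subset 'N(N). Proof. exact: normal_norm. Qed.
Lemma nZG : G \subset 'N(Z).
Proof. exact: normal_norm (char_normal_trans (center_char N) nNG). Qed.
Lemma abZ : abelian Z. Proof. exact: center_abelian. Qed.
Lemma pZ : p.-group Z. Proof. exact: pgroupS (subset_trans (center_sub N) sNG) pG. Qed.
Lemma cZ a b : a \in Z -> b \in Z -> commute a b.
Proof. move=> aZ bZ; exact: (centsP abZ). Qed.
Lemma memM x : (x \in M) = (x \in Z) && (x ^+ p == 1).
Proof.
have ab := Ohm1_abelem pZ abZ.
rewrite abelemE // in ab; case/andP: ab => _ ex.
by rewrite (Ohm1Eexponent pr_p ex) !inE.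
Qed.
Lemma sMZ : M \subset Z. Proof. exact: Ohm_sub. Qed.
Lemma sZN : Z \subset N. Proof. exact: center_sub. Qed.
Lemma MN x : x \in M -> x \in N.
Proof. by move=> xM; apply: (subsetP sZN); apply: (subsetP sMZ). Qed.
Lemma MG x : x \in M -> x \in G.
Proof. by move=> xM; apply: (subsetP sNG); apply: MN. Qed.
Lemma ZG_Z : 'Z(G) \subset Z.
Proof.
apply/subsetP => z /centerP[zG cz].
have zC : z \in 'C(N) by apply/centP => y yN; apply: cz; apply: (subsetP sNG).
apply/centerP; split; last by move=> y yN; exact: (centP zC).
by apply: (subsetP sCN); rewrite inE zG zC.
Qed.

Lemma repr_conj m y : y \in 'N(N) -> m \in Z -> m ^ repr (coset N y) = m ^ y.
Proof.
move=> yN mZ; have := mem_repr_coset (coset N y); rewrite val_coset //.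
case/rcosetP => n nN ->; rewrite conjgM.
suff -> : m ^ n = m by [].
apply/conjg_fixP; apply/commgP; case/centerP: mZ => _ c; exact: c.
Qed.

Lemma repr_in xb : xb \in G / N -> repr xb \in G.
Proof.
move=> xbG; rewrite -(quotientGK nNG); apply: mem_morphpre.
  exact: repr_coset_norm.
by rewrite /= coset_reprK.
Qed.

Section Der.
Variable d : {ffun coset_of N -> gT}.
Hypothesis dD : d \in Der G N M.

Lemma der_in xb : xb \in G / N -> d xb \in M.
Proof. by move: dD; rewrite inE /is_der => /andP[/andP[/forallP h _] _] /(implyP (h xb)). Qed.
Lemma der_out xb : xb \notin G / N -> d xb = 1.
Proof. by move: dD; rewrite inE /is_der => /andP[/andP[_ /forallP h] _] /(implyP (h xb)) /eqP. Qed.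
Lemma derM xb yb : xb \in G / N -> yb \in G / N -> d (xb * yb) = cact (d xb) yb * d yb.
Proof.
move: dD; rewrite inE /is_der => /andP[_ /forall_inP h] xG yG.
by have /forall_inP/(_ yb yG)/eqP := h xb xG.
Qed.
Lemma der1 : d 1 = 1.
Proof.
have G1 : (1 : coset_of N) \in G / N by exact: group1.
have := derM G1 G1; rewrite mulg1 /cact.
rewrite -(morph1 (coset N)) repr_conj ?group1 //; last first.
  by apply: (subsetP sMZ); rewrite morph1; apply: der_in.
rewrite conjg1 morph1 => E.
by apply: (mulIg (d 1)); rewrite mul1g -E.
Qed.
Lemma der_coset_val y : y \in G -> d (coset N y) \in M.
Proof. by move=> yG; apply: der_in; apply: mem_quotient. Qed.

Definition alpha (y : gT) : gT := y * d (coset N y).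

Lemma alphaG y : y \in G -> alpha y \in G.
Proof. by move=> yG; rewrite /alpha groupM // MG // der_coset_val. Qed.
Lemma coset_alpha y : y \in G -> coset N (alpha y) = coset N y.
Proof. by move=> yG; rewrite /alpha coset_kerr // MN // der_coset_val. Qed.

Lemma alpha_morphic : morphic G alpha.
Proof.
apply/morphicP => x y xG yG.
have xN := subsetP nNG' x xG; have yN := subsetP nNG' y yG.
rewrite /alpha morphM // derM ?mem_quotient // /cact repr_conj //; last first.
  by apply: (subsetP sMZ); apply: der_coset_val.
by rewrite conjgE !mulgA mulgK.
Qed.

Definition alphaM := morphm alpha_morphic.

Lemma alpha_injm : 'injm alphaM.
Proof.
apply/injmP => x y xG yG; rewrite /= !morphmE => E.
have Ec : coset N x = coset N y by rewrite -coset_alpha // E coset_alpha.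
by move: E; rewrite /alpha Ec => /mulIg.
Qed.

Lemma alpha_im : alphaM @* G = G.
Proof.
apply/eqP; rewrite eqEcard (card_injm alpha_injm) // leqnn andbT.
apply/subsetP => _ /morphimP[y _ yG ->]; rewrite /= morphmE; exact: alphaG.
Qed.

Definition alpha_aut := aut alpha_injm alpha_im.

Lemma alpha_autE y : y \in G -> alpha_aut y = alpha y.
Proof. by move=> yG; rewrite /alpha_aut autE //= morphmE. Qed.

Lemma alpha_iter k y : y \in G -> iter k alpha_aut y = y * d (coset N y) ^+ k.
Proof.
move=> yG; elim: k => [|k IH] /=; first by rewrite mulg1.
have yk : y * d (coset N y) ^+ k \in G by rewrite groupM // groupX // MG // der_coset_val.
rewrite IH alpha_autE // /alpha coset_kerr ?groupX ?MN ?der_coset_val //.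
by rewrite expgSr mulgA.
Qed.

Lemma alpha_exp : alpha_aut ^+ p = 1.
Proof.
have aA : alpha_aut \in Aut G by apply: Aut_aut.
apply: (eq_Aut (groupX _ aA) (group1 _)) => y yG.
rewrite permX perm1 alpha_iter //.
have := der_coset_val yG; rewrite memM => /andP[_ /eqP ->]; exact: mulg1.
Qed.

Definition innerb x := (x \in G) && [forall y in G, alpha y == y ^ x].

Lemma inner_ex :
  (forall a : {perm gT}, a \in Aut G -> #[a]%g = p -> inner_aut G a) ->
  exists x, innerb x.
Proof.
move=> Hinn; have aA : alpha_aut \in Aut G by apply: Aut_aut.
case: (eqVneq alpha_aut 1) => [a1 | an1].
  exists 1; rewrite /innerb group1; apply/forall_inP => y yG.
  by rewrite conjg1 -alpha_autE // a1 perm1.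
have op : #[alpha_aut]%g = p.
  apply/prime_nt_dvdP => //; first by rewrite order_eq1.
  by rewrite order_dvdn alpha_exp.
have [x xG hx] := Hinn _ aA op.
exists x; rewrite /innerb xG; apply/forall_inP => y yG.
by rewrite -alpha_autE // hx.
Qed.

Section X.
Variable x : gT.
Hypothesis ix : innerb x.

Lemma inner_G : x \in G. Proof. by case/andP: ix. Qed.
Lemma inner_comm y : y \in G -> d (coset N y) = [~ y, x].
Proof.
move=> yG; case/andP: ix => _ /forall_inP/(_ y yG)/eqP; rewrite /alpha => E.
by rewrite commgEl -E mulKg.
Qed.
Lemma inner_Z : x \in Z.
Proof.
have xG := inner_G.
have xC : x \in 'C(N).
  apply/centP => y yN; have yG := subsetP sNG y yN.
  have := inner_comm yG; rewrite coset_id // der1 => /esym/eqP/commgP.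
  by move=> c; apply/esym.
apply/centerP; split; last by move=> y yN; exact: (centP xC).
by apply: (subsetP sCN); rewrite inE xG xC.
Qed.
End X.
End Der.

Lemma commZ y a : y \in G -> a \in Z -> [~ y, a] \in Z.
Proof.
move=> yG aZ; rewrite commgEr groupM // memJ_norm ?groupV //.
exact: (subsetP nZG).
Qed.

Lemma commM y a b : y \in G -> a \in Z -> b \in Z ->
  [~ y, a * b] = [~ y, a] * [~ y, b].
Proof.
move=> yG aZ bZ; rewrite commgMJ.
have -> : [~ y, a] ^ b = [~ y, a].
  by apply/conjg_fixP; apply/commgP; apply: cZ => //; apply: commZ.
by apply: cZ; apply: commZ.
Qed.

Lemma commX y a k : y \in G -> a \in Z -> [~ y, a ^+ k] = [~ y, a] ^+ k.
Proof.
move=> yG aZ; elim: k => [|k IH]; first by rewrite !expg0 commg1.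
by rewrite !expgSr commM ?groupX // IH.
Qed.

Lemma commZG y u : y \in G -> u \in 'Z(G) -> [~ y, u] = 1.
Proof.
move=> yG /centerP[_ c]; apply/eqP/commgP; apply/esym; exact: c.
Qed.

Lemma inner_xp d x : d \in Der G N M -> innerb d x -> x ^+ p \in 'Z(G).
Proof.
move=> dD ix; have xG := inner_G ix; have xZ := inner_Z dD ix.
apply/centerP; split; first exact: groupX.
move=> y yG; apply/esym/commgP; rewrite commX //.
by rewrite -(inner_comm ix yG); have := der_coset_val dD yG; rewrite memM => /andP[_].
Qed.

Lemma inner_derE h xb : xb \in G / N -> inner_der G N h xb = [~ repr xb, h].
Proof. by move=> xbG; rewrite ffunE xbG /cact commgEr. Qed.
Lemma inner_derO h xb : xb \notin G / N -> inner_der G N h xb = 1.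
Proof. by move=> xbG; rewrite ffunE (negbTE xbG). Qed.

Lemma fmul_inner a b : a \in Z -> b \in Z ->
  fmul (inner_der G N a) (inner_der G N b) = inner_der G N (a * b).
Proof.
move=> aZ bZ; apply/ffunP => xb; rewrite ffunE.
case: (boolP (xb \in G / N)) => xbG.
  by rewrite !inner_derE // commM // repr_in.
by rewrite !inner_derO // mulg1.
Qed.

Lemma fmulA (a b c : {ffun coset_of N -> gT}) : fmul (fmul a b) c = fmul a (fmul b c).
Proof. by apply/ffunP => xb; rewrite !ffunE mulgA. Qed.

Lemma class_mul d w : w \in M ->
  der_class G M (fmul d (inner_der G N w)) = der_class G M d.
Proof.
move=> wM; have wZ := subsetP sMZ w wM.
apply/setP => e; apply/imsetP/imsetP => [[i /imsetP[h hM ->] ->] | [i /imsetP[h hM ->] ->]].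
  exists (inner_der G N (w * h)); first by apply: imset_f; rewrite groupM.
  by rewrite fmulA fmul_inner // (subsetP sMZ).
exists (inner_der G N (w^-1 * h)); first by apply: imset_f; rewrite groupM ?groupV.
rewrite fmulA fmul_inner ?groupM ?groupV ?(subsetP sMZ) // mulKVg.
by [].
Qed.

Lemma class_eq d1 d2 x1 x2 u :
  d1 \in Der G N M -> d2 \in Der G N M -> innerb d1 x1 -> innerb d2 x2 ->
  u \in 'Z(G) -> x1 ^+ p = u ^+ p * x2 ^+ p ->
  der_class G M d1 = der_class G M d2.
Proof.
move=> dD1 dD2 i1 i2 uZG E.
have x1Z := inner_Z dD1 i1; have x2Z := inner_Z dD2 i2.
have uZ := subsetP ZG_Z u uZG.
have ux2 : u * x2 \in Z by rewrite groupM.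
pose w := x1 * (u * x2)^-1.
have wZ : w \in Z by rewrite groupM ?groupV.
have wM : w \in M.
  rewrite memM wZ /w expgMn; last by apply: cZ; rewrite ?groupV.
  by rewrite expVgn expgMn ?E ?mulgV ?eqxx //; apply: cZ.
have x1E : x1 = w * (u * x2) by rewrite /w mulgKV.
clearbody w.
rewrite -(class_mul d2 wM); congr (der_class _ _ _).
apply/ffunP => xb; rewrite ffunE.
case: (boolP (xb \in G / N)) => xbG; last by rewrite (der_out dD1) ?(der_out dD2) ?inner_derO // mulg1.
have yG := repr_in xbG.
rewrite inner_derE // -{1 2}(coset_reprK xb) (inner_comm i1 yG) (inner_comm i2 yG).
rewrite x1E !commM // (commZG yG uZG) mul1g; apply: cZ; exact: commZ.
Qed.

Lemma main_contra m : dgen 'Z(G) < m -> #|H1 G N M| = (p ^ m)%N ->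
  (forall a : {perm gT}, a \in Aut G -> #[a]%g = p -> inner_aut G a) -> False.
Proof.
move=> dlt cardH Hinn.
pose xf d := odflt 1 [pick x | innerb d x].
have xfP d : d \in Der G N M -> innerb d (xf d).
  move=> dD; rewrite /xf; case: pickP => [x //| none].
  by have [x ix] := inner_ex dD Hinn; rewrite none in ix.
pose fc d := 'Mho^1('Z(G)) :* (xf d ^+ p).
have pZG : p.-group 'Z(G) := pgroupS (center_sub G) pG.
have abZG := center_abelian G.
have le1 : #|H1 G N M| <= #|fc @: Der G N M|.
  apply: card_imset_factor => d1 d2 dD1 dD2 /rcoset_eqP.
  have mE : ('Mho^1('Z(G))%G : {set gT}) = [set x ^+ (p ^ 1) | x in 'Z(G)] := MhoEabelian 1 pZG abZG.
  rewrite mem_rcoset mE expn1 => /imsetP[u uZG E].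
  apply: (class_eq dD1 dD2 (xfP _ dD1) (xfP _ dD2) uZG).
  by rewrite -E mulgKV.
have le2 : #|fc @: Der G N M| <= #|'Z(G) : 'Mho^1('Z(G))|.
  apply: subset_leq_card; apply/subsetP => _ /imsetP[d dD ->].
  apply/rcosetsP; exists (xf d ^+ p) => //; exact: inner_xp dD (xfP _ dD).
have e3 : #|'Z(G) : 'Mho^1('Z(G))| = #|'Ohm_1('Z(G))|.
  have E1 := mul_card_Ohm_Mho_abelian 1 abZG.
  have E2 := Lagrange (Mho_sub 1 'Z(G)).
  apply/eqP; rewrite -(eqn_pmul2l (cardG_gt0 ('Mho^1('Z(G))))) E2 -{1}E1 mulnC.
  done.
have e4 : #|'Ohm_1('Z(G))| = (p ^ 'm('Z(G)))%N.
  rewrite grank_abelian // (rank_abelian_pgroup pZG abZG).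
  exact: card_pgroup (pgroupS (Ohm_sub 1 _) pZG).
have [S defS leS] := dgen_witness 'Z(G).
have le5 : 'm('Z(G)) <= dgen 'Z(G).
  by have := grank_min S; rewrite defS => h; exact: leq_trans h leS.
have : (p ^ m <= p ^ dgen 'Z(G))%N.
  rewrite -cardH; apply: leq_trans le1 _; apply: leq_trans le2 _.
  by rewrite e3 e4 leq_pexp2l ?prime_gt0.
by rewrite leq_exp2l ?prime_gt1 // leqNgt dlt.
Qed.

End Main.

Theorem lemma2p5 (gT : finGroupType) (p : nat) (G N : {group gT}) (m : nat) :
  prime p -> odd p ->
  p.-group G -> ~~ abelian G ->
  N <| G -> 'C_G(N) \subset N ->
  0 < m -> dgen 'Z(G) < m ->
  #|H1 G N 'Ohm_1('Z(N))| = (p ^ m)%N ->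
  exists2 a : {perm gT}, a \in Aut G & (#[a]%g = p /\ ~ inner_aut G a).
Proof.
move=> pr_p _ pG _ nNG sCN _ dlt cardH.
apply: NNPP => hno.
apply: (main_contra pr_p pG nNG sCN dlt cardH) => a aA oa.
apply: NNPP => ninn; apply: hno; by exists a.
Qed.
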